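(* Let $f:\Sigma\to\mathbb{S}^4_1$ be a non-isotropic conformal marginally trapped immersion with null Gauss map $G:\Sigma\to\mathbb{S}^3$. Then $G$ is an envelope of the sphere congruence determined by $f$: every local lift $W$ of $G$ satisfies $\langle f,W\rangle=0$ and $\langle f,dW\rangle=0$. Moreover, the central sphere congruence of $G$ coincides with the one determined by $\pm f$, i.e. $V=f^\perp$ at every point, where $V=\mathrm{span}\{X,X_z,X_{\bar z},X_{z\bar z}\}$ for any local lift $X$ of $G$.
   Context: $\mathbb{R}^5_1$ is $\mathbb{R}^5$ with Lorentz product $\langle x,y\rangle=x_0y_0+x_1y_1+x_2y_2+x_3y_3-x_4y_4$, extended complex-bilinearly; $\mathbb{S}^4_1=\{\langle x,x\rangle=1\}$; $X$ future pointing means $\langle X,e_4\rangle<0$; $\mathcal L$ is the light cone and $\mathbb{S}^3\cong P(\mathcal L)$. $f:\Sigma\to\mathbb{S}^4_1$ is a conformal spacelike immersion, $\langle f_z,f_{\bar z}\rangle=e^{2u}$. A positively oriented orthonormal frame $\{N_1,N_2\}$ of the oriented Lorentzian normal bundle has $\langle N_1,N_1\rangle=1$, $\langle N_2,N_2\rangle=-1$, $\langle N_1,N_2\rangle=0$, $N_2$ future pointing and the orientation of $\nu(f)$. $\xi_1=\langle f_{zz},N_1\rangle$, $\xi_2=-\langle f_{zz},N_2\rangle$. $\mathbf H$ is defined by $f_{z\bar z}=-e^{2u}f+e^{2u}\mathbf H$; marginally trapped means $\langle\mathbf H,\mathbf H\rangle=0$, orientation chosen with $\mathbf H=h(N_1+N_2)$.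 $f$ is non-isotropic if $\langle f_{zz},f_{zz}\rangle=\xi_1^2-\xi_2^2$ never vanishes (then $\xi_1\ne\xi_2$ everywhere and $G$ is a conformal immersion). The null Gauss map is $G(x)=[N_1(x)+N_2(x)]$; a local lift of $G$ is a map $W$ into $\mathcal L$ with $[W]=G$. The sphere congruence determined by $f$ assigns to $x$ the $2$-sphere $P(f(x)^\perp\cap\mathcal L)\subset\mathbb{S}^3$; the central sphere congruence of $G$ is the rank 4 bundle $V$ (spheres $P(V_x\cap\mathcal L)$). *)

(* Defs.v *)
From Stdlib Require Import Reals ClassicalEpsilon.
Open Scope R_scope.

Record V5 := mkV5 { c0 : R; c1 : R; c2 : R; c3 : R; c4 : R }.

Definition vadd (a b : V5) : V5 :=
  mkV5 (c0 a + c0 b) (c1 a + c1 b) (c2 a + c2 b) (c3 a + c3 b) (c4 a + c4 b).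
Definition vscal (t : R) (a : V5) : V5 :=
  mkV5 (t * c0 a) (t * c1 a) (t * c2 a) (t * c3 a) (t * c4 a).
Definition vzero : V5 := mkV5 0 0 0 0 0.

Definition ldot (a b : V5) : R :=
  c0 a * c0 b + c1 a * c1 b + c2 a * c2 b + c3 a * c3 b - c4 a * c4 b.

Definition e4 : V5 := mkV5 0 0 0 0 1.

Definition future_pointing (X : V5) : Prop := ldot X e4 < 0.

Definition in_light_cone (X : V5) : Prop := X <> vzero /\ ldot X X = 0.

(* [a] = [b] in the projectivized light cone *)
Definition same_proj_point (a b : V5) : Prop :=
  a <> vzero /\ b <> vzero /\ exists t : R, t <> 0 /\ a = vscal t b.

Record C := mkC { re : R; im : R }.
Definition C0 : C := mkC 0 0.

(* complex vectors  A + i B  in C^5 *)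
Record CV := mkCV { rv : V5; iv : V5 }.
Definition creal (a : V5) : CV := mkCV a vzero.

(* complex-bilinear extension of the Lorentz product *)
Definition cdot (a b : CV) : C :=
  mkC (ldot (rv a) (rv b) - ldot (iv a) (iv b))
      (ldot (rv a) (iv b) + ldot (iv a) (rv b)).

Definition dxr (g : R -> R -> R) (x y : R) : R :=
  epsilon (inhabits 0) (fun l => derivable_pt_lim (fun t => g t y) x l).
Definition dyr (g : R -> R -> R) (x y : R) : R :=
  epsilon (inhabits 0) (fun l => derivable_pt_lim (fun t => g x t) y l).

Definition compmap (F : R -> R -> V5) (k : V5 -> R) : R -> R -> R :=
  fun x y => k (F x y).

Definition Pdx (F : R -> R -> V5) (x y : R) : V5 :=
  mkV5 (dxr (compmap F c0) x y) (dxr (compmap F c1) x y) (dxr (compmap F c2) x y)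
       (dxr (compmap F c3) x y) (dxr (compmap F c4) x y).
Definition Pdy (F : R -> R -> V5) (x y : R) : V5 :=
  mkV5 (dyr (compmap F c0) x y) (dyr (compmap F c1) x y) (dyr (compmap F c2) x y)
       (dyr (compmap F c3) x y) (dyr (compmap F c4) x y).

(* d/dz = (d/dx - i d/dy)/2 and d/dzbar = (d/dx + i d/dy)/2 on C^5-valued maps *)
Definition dzC (G : R -> R -> CV) (x y : R) : CV :=
  let A := fun a b => rv (G a b) in let B := fun a b => iv (G a b) in
  mkCV (vscal (/2) (vadd (Pdx A x y) (Pdy B x y)))
       (vscal (/2) (vadd (Pdx B x y) (vscal (-1) (Pdy A x y)))).
Definition dzbC (G : R -> R -> CV) (x y : R) : CV :=
  let A := fun a b => rv (G a b) in let B := fun a b => iv (G a b) in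
  mkCV (vscal (/2) (vadd (Pdx A x y) (vscal (-1) (Pdy B x y))))
       (vscal (/2) (vadd (Pdx B x y) (Pdy A x y))).
Definition dz (F : R -> R -> V5) : R -> R -> CV := dzC (fun a b => creal (F a b)).
Definition dzb (F : R -> R -> V5) : R -> R -> CV := dzbC (fun a b => creal (F a b)).

Definition open2 (U : R -> R -> Prop) : Prop :=
  forall x y, U x y -> exists e, e > 0 /\
    forall x' y', (x' - x) ^ 2 + (y' - y) ^ 2 < e ^ 2 -> U x' y'.

Definition subset2 (U U' : R -> R -> Prop) : Prop := forall x y, U x y -> U' x y.

Definition cont2_at (g : R -> R -> R) (x y : R) : Prop :=
  forall eps, eps > 0 -> exists d, d > 0 /\
    forall x' y', (x' - x) ^ 2 + (y' - y) ^ 2 < d ^ 2 -> Rabs (g x' y' - g x y) < eps.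

Fixpoint Ck_on (k : nat) (U : R -> R -> Prop) (g : R -> R -> R) : Prop :=
  match k with
  | O => forall x y, U x y -> cont2_at g x y
  | S k' =>
      (forall x y, U x y -> cont2_at g x y) /\
      (forall x y, U x y -> derivable_pt_lim (fun t => g t y) x (dxr g x y)) /\
      (forall x y, U x y -> derivable_pt_lim (fun t => g x t) y (dyr g x y)) /\
      Ck_on k' U (dxr g) /\ Ck_on k' U (dyr g)
  end.

Definition smooth_on (U : R -> R -> Prop) (F : R -> R -> V5) : Prop :=
  forall k, Ck_on k U (compmap F c0) /\ Ck_on k U (compmap F c1) /\
            Ck_on k U (compmap F c2) /\ Ck_on k U (compmap F c3) /\
            Ck_on k U (compmap F c4).

Definition conformal_spacelike_immersion_S41 (U : R -> R -> Prop) (f : R -> R -> V5) : Prop :=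
  smooth_on U f /\
  forall x y, U x y ->
    ldot (f x y) (f x y) = 1 /\
    ldot (Pdx f x y) (Pdx f x y) > 0 /\
    ldot (Pdx f x y) (Pdx f x y) = ldot (Pdy f x y) (Pdy f x y) /\
    ldot (Pdx f x y) (Pdy f x y) = 0.

Definition e2u (f : R -> R -> V5) (x y : R) : R := re (cdot (dz f x y) (dzb f x y)).

Definition normal_frame (U : R -> R -> Prop) (f N1 N2 : R -> R -> V5) : Prop :=
  smooth_on U N1 /\ smooth_on U N2 /\
  forall x y, U x y ->
    ldot (N1 x y) (f x y) = 0 /\ ldot (N1 x y) (Pdx f x y) = 0 /\ ldot (N1 x y) (Pdy f x y) = 0 /\
    ldot (N2 x y) (f x y) = 0 /\ ldot (N2 x y) (Pdx f x y) = 0 /\ ldot (N2 x y) (Pdy f x y) = 0 /\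
    ldot (N1 x y) (N1 x y) = 1 /\ ldot (N2 x y) (N2 x y) = -1 /\ ldot (N1 x y) (N2 x y) = 0 /\
    future_pointing (N2 x y).

Definition is_mean_curvature (U : R -> R -> Prop) (f H : R -> R -> V5) : Prop :=
  forall x y, U x y ->
    dzbC (dz f) x y =
      creal (vadd (vscal (- e2u f x y) (f x y)) (vscal (e2u f x y) (H x y))).

Definition non_isotropic (U : R -> R -> Prop) (f : R -> R -> V5) : Prop :=
  forall x y, U x y -> cdot (dzC (dz f) x y) (dzC (dz f) x y) <> C0.

(* null Gauss map G = [N1 + N2];  W is a local lift of G on U' *)
Definition local_lift_of_null_gauss (U' : R -> R -> Prop) (N1 N2 W : R -> R -> V5) : Prop :=
  smooth_on U' W /\
  forall x y, U' x y ->
    in_light_cone (W x y) /\ same_proj_point (W x y) (vadd (N1 x y) (N2 x y)).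

(* V_p = span{X, X_z, X_zbar, X_{z zbar}} intersected with R^5
       = real span {X, X_x, X_y, X_xx + X_yy}  (X_{z zbar} = (X_xx + X_yy)/4) *)
Definition in_central_span (X : R -> R -> V5) (x y : R) (v : V5) : Prop :=
  exists a b c d : R,
    v = vadd (vadd (vscal a (X x y)) (vscal b (Pdx X x y)))
             (vadd (vscal c (Pdy X x y))
                   (vscal d (vadd (Pdx (Pdx X) x y) (Pdy (Pdy X) x y)))).

(* Main.v *)
Require Import Defs.
From Stdlib Require Import Reals ClassicalEpsilon Lra.
From mathcomp Require all_boot all_algebra Rstruct.
Open Scope R_scope.

Definition lin5 (a1 a2 a3 a4 a5 : R) (e1 e2 e3 e4 e5 : V5) : V5 :=
  vadd (vadd (vadd (vadd (vscal a1 e1) (vscal a2 e2)) (vscal a3 e3)) (vscal a4 e4)) (vscal a5 e5).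

Module LA.
Import all_boot all_algebra Rstruct.
Import GRing.Theory.
Local Open Scope ring_scope.

Definition comp (v : V5) (j : nat) : R :=
  match j with 0%N => Defs.c0 v | 1%N => Defs.c1 v | 2%N => Defs.c2 v | 3%N => Defs.c3 v | _ => Defs.c4 v end.

Lemma addE (x y : R) : (x + y)%R = Rplus x y. Proof. by []. Qed.
Lemma mulE (x y : R) : (x * y)%R = Rmult x y. Proof. by []. Qed.
Lemma zeroE : (0 : R)%R = R0. Proof. by []. Qed.

Lemma span5 (e1 e2 e3 e4 e5 : V5) :
  (forall a1 a2 a3 a4 a5, lin5 a1 a2 a3 a4 a5 e1 e2 e3 e4 e5 = vzero ->
     a1 = 0 /\ a2 = 0 /\ a3 = 0 /\ a4 = 0 /\ a5 = 0) ->
  forall v, exists a1 a2 a3 a4 a5, v = lin5 a1 a2 a3 a4 a5 e1 e2 e3 e4 e5.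
Proof.
move=> Hind v.
pose vec (i : nat) := match i with 0%N => e1 | 1%N => e2 | 2%N => e3 | 3%N => e4 | _ => e5 end.
pose M : 'M[R]_5 := \matrix_(i < 5, j < 5) comp (vec i) j.
pose i1 : 'I_5 := lift ord0 ord0.
pose i2 : 'I_5 := lift ord0 (lift ord0 ord0).
pose i3 : 'I_5 := lift ord0 (lift ord0 (lift ord0 ord0)).
pose i4 : 'I_5 := lift ord0 (lift ord0 (lift ord0 (lift ord0 ord0))).
have key : forall u : 'rV[R]_5, forall j : 'I_5,
   (u *m M) 0 j = comp (lin5 (u 0 ord0) (u 0 i1) (u 0 i2) (u 0 i3) (u 0 i4) e1 e2 e3 e4 e5) j.
  move=> u j; rewrite mxE !big_ord_recl big_ord0 !mxE.
  case: j => [[|[|[|[|[|j]]]]] Hj] //=; rewrite /lin5 /i1 /i2 /i3 /i4 /= !addE !mulE;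
  set a0 := u 0 ord0; set a1 := u 0 (lift ord0 ord0);
  set a2 := u 0 (lift ord0 (lift ord0 ord0));
  set a3 := u 0 (lift ord0 (lift ord0 (lift ord0 ord0)));
  set a4 := u 0 (lift ord0 (lift ord0 (lift ord0 (lift ord0 ord0))));
  clearbody a0 a1 a2 a3 a4; rewrite Rplus_0_r; ring.
have Hfree : forall u : 'rV[R]_5, u *m M = 0 -> u = 0.
  move=> u Hu.
  have Hz : lin5 (u 0 ord0) (u 0 i1) (u 0 i2) (u 0 i3) (u 0 i4) e1 e2 e3 e4 e5 = vzero.
    have K : forall j : 'I_5, comp (lin5 (u 0 ord0) (u 0 i1) (u 0 i2) (u 0 i3) (u 0 i4) e1 e2 e3 e4 e5) j = 0.
      by move=> j; rewrite -key Hu mxE.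
    move: (K ord0) (K i1) (K i2) (K i3) (K i4).
    case: (lin5 _ _ _ _ _ _ _ _ _ _) => a b c d e /= -> -> -> -> ->; by [].
  have [H0 [H1 [H2 [H3 H4]]]] := Hind _ _ _ _ _ Hz.
  apply/rowP => j; rewrite mxE.
  case: j => [[|[|[|[|[|j]]]]] Hj] //.
  - by rewrite (_ : Ordinal Hj = ord0) //; apply/val_inj.
  - by rewrite (_ : Ordinal Hj = i1) //; apply/val_inj.
  - by rewrite (_ : Ordinal Hj = i2) //; apply/val_inj.
  - by rewrite (_ : Ordinal Hj = i3) //; apply/val_inj.
  - by rewrite (_ : Ordinal Hj = i4) //; apply/val_inj.
have Hrf : row_free M.
  rewrite -kermx_eq0; apply/eqP/row_matrixP => i; rewrite row0.
  apply: Hfree; by rewrite -row_mul mulmx_ker row0.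
have Hfull : row_full M by rewrite row_full_unit -row_free_unit.
pose vr : 'rV[R]_5 := \row_(j < 5) comp v j.
have : (vr <= M)%MS by apply: submx_full.
case/submxP => D HD.
exists (D 0 ord0), (D 0 i1), (D 0 i2), (D 0 i3), (D 0 i4).
have K : forall j : 'I_5, comp v j = comp (lin5 (D 0 ord0) (D 0 i1) (D 0 i2) (D 0 i3) (D 0 i4) e1 e2 e3 e4 e5) j.
  by move=> j; rewrite -key -HD mxE.
move: (K ord0) (K i1) (K i2) (K i3) (K i4).
case: v {vr HD K} => a b c d e /=.
by move=> -> -> -> -> ->.
Qed.
End LA.

From Coquelicot Require Coquelicot.
From Stdlib Require Import Lra Psatz.
From Stdlib Require Import Lra Psatz.
Open Scope R_scope.

Lemma ldot_comm a b : ldot a b = ldot b a.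
Proof. destruct a, b; unfold ldot; simpl; ring. Qed.
Lemma ldot_addl a b c : ldot (vadd a b) c = ldot a c + ldot b c.
Proof. destruct a, b, c; unfold ldot; simpl; ring. Qed.
Lemma ldot_addr a b c : ldot a (vadd b c) = ldot a b + ldot a c.
Proof. destruct a, b, c; unfold ldot; simpl; ring. Qed.
Lemma ldot_scall k a b : ldot (vscal k a) b = k * ldot a b.
Proof. destruct a, b; unfold ldot; simpl; ring. Qed.
Lemma ldot_scalr k a b : ldot a (vscal k b) = k * ldot a b.
Proof. destruct a, b; unfold ldot; simpl; ring. Qed.
Lemma ldot_zerol a : ldot vzero a = 0.
Proof. destruct a; unfold ldot; simpl; ring. Qed.
Lemma ldot_zeror a : ldot a vzero = 0.
Proof. destruct a; unfold ldot; simpl; ring. Qed.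

Ltac ldexp := repeat progress (rewrite ?ldot_addl, ?ldot_addr, ?ldot_scall, ?ldot_scalr, ?ldot_zerol, ?ldot_zeror).
Ltac ldexp_in H := repeat progress (rewrite ?ldot_addl, ?ldot_addr, ?ldot_scall, ?ldot_scalr, ?ldot_zerol, ?ldot_zeror in H).

Lemma dxr_eq g x y l : derivable_pt_lim (fun t => g t y) x l -> dxr g x y = l.
Proof.
  intro H. unfold dxr.
  apply (uniqueness_limite (fun t => g t y) x).
  - apply (epsilon_spec (inhabits 0) (fun l => derivable_pt_lim (fun t => g t y) x l)).
    exists l; exact H.
  - exact H.
Qed.
Lemma dyr_eq g x y l : derivable_pt_lim (fun t => g x t) y l -> dyr g x y = l.
Proof.
  intro H. unfold dyr.
  apply (uniqueness_limite (fun t => g x t) y).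
  - apply (epsilon_spec (inhabits 0) (fun l => derivable_pt_lim (fun t => g x t) y l)).
    exists l; exact H.
  - exact H.
Qed.

Definition is_coord (k : V5 -> R) : Prop := k = c0 \/ k = Defs.c1 \/ k = c2 \/ k = c3 \/ k = c4.

Definition HDx (F : R -> R -> V5) x y (l : V5) : Prop :=
  forall k, is_coord k -> derivable_pt_lim (fun t => k (F t y)) x (k l).
Definition HDy (F : R -> R -> V5) x y (l : V5) : Prop :=
  forall k, is_coord k -> derivable_pt_lim (fun t => k (F x t)) y (k l).

Lemma c0i : is_coord c0. Proof. left; reflexivity. Qed.
Lemma c1i : is_coord Defs.c1. Proof. right; left; reflexivity. Qed.
Lemma c2i : is_coord c2. Proof. right; right; left; reflexivity. Qed.
Lemma c3i : is_coord c3. Proof. right; right; right; left; reflexivity. Qed.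
Lemma c4i : is_coord c4. Proof. right; right; right; right; reflexivity. Qed.

Lemma HDx_Pdx F x y l : HDx F x y l -> Pdx F x y = l.
Proof.
  intro H. destruct l as [l0 l1 l2 l3 l4]. unfold Pdx.
  f_equal; apply dxr_eq; unfold compmap.
  - exact (H c0 c0i). - exact (H Defs.c1 c1i). - exact (H c2 c2i).
  - exact (H c3 c3i). - exact (H c4 c4i).
Qed.
Lemma HDy_Pdy F x y l : HDy F x y l -> Pdy F x y = l.
Proof.
  intro H. destruct l as [l0 l1 l2 l3 l4]. unfold Pdy.
  f_equal; apply dyr_eq; unfold compmap.
  - exact (H c0 c0i). - exact (H Defs.c1 c1i). - exact (H c2 c2i).
  - exact (H c3 c3i). - exact (H c4 c4i).
Qed.

Lemma dpl_plus f g x a b : derivable_pt_lim f x a -> derivable_pt_lim g x b ->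
  derivable_pt_lim (fun t => f t + g t) x (a + b).
Proof. intros; apply (derivable_pt_lim_plus f g); auto. Qed.
Lemma dpl_minus f g x a b : derivable_pt_lim f x a -> derivable_pt_lim g x b ->
  derivable_pt_lim (fun t => f t - g t) x (a - b).
Proof. intros; apply (derivable_pt_lim_minus f g); auto. Qed.
Lemma dpl_mult f g x a b : derivable_pt_lim f x a -> derivable_pt_lim g x b ->
  derivable_pt_lim (fun t => f t * g t) x (a * g x + f x * b).
Proof. intros; apply (derivable_pt_lim_mult f g); auto. Qed.
Lemma dpl_scal k f x a : derivable_pt_lim f x a ->
  derivable_pt_lim (fun t => k * f t) x (k * a).
Proof. intros; apply (derivable_pt_lim_scal f k); auto. Qed.
Lemma dpl_eq f x a b : derivable_pt_lim f x a -> a = b -> derivable_pt_lim f x b.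
Proof. intros H ->; exact H. Qed.

Lemma HDx_scal F x y l k : HDx F x y l -> HDx (fun a b => vscal k (F a b)) x y (vscal k l).
Proof.
  intros H c Hc. destruct Hc as [ -> | [ -> | [ -> | [ -> | -> ] ] ] ]; simpl;
  apply dpl_scal; [apply (H c0 c0i)|apply (H Defs.c1 c1i)|apply (H c2 c2i)|apply (H c3 c3i)|apply (H c4 c4i)].
Qed.
Lemma HDy_scal F x y l k : HDy F x y l -> HDy (fun a b => vscal k (F a b)) x y (vscal k l).
Proof.
  intros H c Hc. destruct Hc as [ -> | [ -> | [ -> | [ -> | -> ] ] ] ]; simpl;
  apply dpl_scal; [apply (H c0 c0i)|apply (H Defs.c1 c1i)|apply (H c2 c2i)|apply (H c3 c3i)|apply (H c4 c4i)].
Qed.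
Lemma HDx_add F G x y l m : HDx F x y l -> HDx G x y m ->
  HDx (fun a b => vadd (F a b) (G a b)) x y (vadd l m).
Proof.
  intros H H' c Hc. destruct Hc as [ -> | [ -> | [ -> | [ -> | -> ] ] ] ]; simpl; apply dpl_plus;
  first [apply (H c0 c0i)|apply (H' c0 c0i)|apply (H Defs.c1 c1i)|apply (H' Defs.c1 c1i)|apply (H c2 c2i)|apply (H' c2 c2i)
        |apply (H c3 c3i)|apply (H' c3 c3i)|apply (H c4 c4i)|apply (H' c4 c4i)].
Qed.
Lemma HDy_add F G x y l m : HDy F x y l -> HDy G x y m ->
  HDy (fun a b => vadd (F a b) (G a b)) x y (vadd l m).
Proof.
  intros H H' c Hc. destruct Hc as [ -> | [ -> | [ -> | [ -> | -> ] ] ] ]; simpl; apply dpl_plus;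
  first [apply (H c0 c0i)|apply (H' c0 c0i)|apply (H Defs.c1 c1i)|apply (H' Defs.c1 c1i)|apply (H c2 c2i)|apply (H' c2 c2i)
        |apply (H c3 c3i)|apply (H' c3 c3i)|apply (H c4 c4i)|apply (H' c4 c4i)].
Qed.
Lemma HDx_zero x y : HDx (fun _ _ => vzero) x y vzero.
Proof. intros c Hc. destruct Hc as [ -> | [ -> | [ -> | [ -> | -> ] ] ] ]; simpl; apply derivable_pt_lim_const. Qed.
Lemma HDy_zero x y : HDy (fun _ _ => vzero) x y vzero.
Proof. intros c Hc. destruct Hc as [ -> | [ -> | [ -> | [ -> | -> ] ] ] ]; simpl; apply derivable_pt_lim_const. Qed.

Lemma HDx_ldot F G x y l m : HDx F x y l -> HDx G x y m ->
  derivable_pt_lim (fun t => ldot (F t y) (G t y)) x (ldot l (G x y) + ldot (F x y) m).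
Proof.
  intros H H'. unfold ldot.
  eapply dpl_eq.
  - repeat first [apply dpl_minus | apply dpl_plus | apply dpl_mult];
    first [apply (H c0 c0i)|apply (H' c0 c0i)|apply (H Defs.c1 c1i)|apply (H' Defs.c1 c1i)|apply (H c2 c2i)|apply (H' c2 c2i)
        |apply (H c3 c3i)|apply (H' c3 c3i)|apply (H c4 c4i)|apply (H' c4 c4i)].
  - cbv beta; ring.
Qed.
Lemma HDy_ldot F G x y l m : HDy F x y l -> HDy G x y m ->
  derivable_pt_lim (fun t => ldot (F x t) (G x t)) y (ldot l (G x y) + ldot (F x y) m).
Proof.
  intros H H'. unfold ldot.
  eapply dpl_eq.
  - repeat first [apply dpl_minus | apply dpl_plus | apply dpl_mult];
    first [apply (H c0 c0i)|apply (H' c0 c0i)|apply (H Defs.c1 c1i)|apply (H' Defs.c1 c1i)|apply (H c2 c2i)|apply (H' c2 c2i)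
        |apply (H c3 c3i)|apply (H' c3 c3i)|apply (H c4 c4i)|apply (H' c4 c4i)].
  - cbv beta; ring.
Qed.

Lemma loc_const_x (D : R -> R -> Prop) x y (phi : R -> R -> R) c l :
  open2 D -> D x y -> (forall a b, D a b -> phi a b = c) ->
  derivable_pt_lim (fun t => phi t y) x l -> l = 0.
Proof.
  intros Ho Hd Hc Hl.
  apply (uniqueness_limite (fun t => phi t y) x); auto.
  destruct (Ho x y Hd) as [e [He HU]].
  intros eps Heps. exists (mkposreal e He). intros h Hh0 Hh. simpl in Hh.
  rewrite (Hc (x+h) y), (Hc x y); auto.
  - replace ((c - c) / h - 0) with 0 by (field; auto). rewrite Rabs_R0; auto.
  - apply HU. replace (x + h - x) with h by ring.
    assert (0 <= Rabs h) by apply Rabs_pos.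
    rewrite <- (pow2_abs h). nra.
Qed.
Lemma loc_const_y (D : R -> R -> Prop) x y (phi : R -> R -> R) c l :
  open2 D -> D x y -> (forall a b, D a b -> phi a b = c) ->
  derivable_pt_lim (fun t => phi x t) y l -> l = 0.
Proof.
  intros Ho Hd Hc Hl.
  apply (uniqueness_limite (fun t => phi x t) y); auto.
  destruct (Ho x y Hd) as [e [He HU]].
  intros eps Heps. exists (mkposreal e He). intros h Hh0 Hh. simpl in Hh.
  rewrite (Hc x (y+h)), (Hc x y); auto.
  - replace ((c - c) / h - 0) with 0 by (field; auto). rewrite Rabs_R0; auto.
  - apply HU. replace (y + h - y) with h by ring.
    assert (0 <= Rabs h) by apply Rabs_pos.
    rewrite <- (pow2_abs h). nra.
Qed.

Lemma dot_const_x D F G x y c l m : open2 D -> D x y ->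
  (forall a b, D a b -> ldot (F a b) (G a b) = c) -> HDx F x y l -> HDx G x y m ->
  ldot l (G x y) + ldot (F x y) m = 0.
Proof.
  intros Ho Hd Hc H1 H2.
  apply (loc_const_x D x y (fun a b => ldot (F a b) (G a b)) c); auto.
  apply HDx_ldot; auto.
Qed.
Lemma dot_const_y D F G x y c l m : open2 D -> D x y ->
  (forall a b, D a b -> ldot (F a b) (G a b) = c) -> HDy F x y l -> HDy G x y m ->
  ldot l (G x y) + ldot (F x y) m = 0.
Proof.
  intros Ho Hd Hc H1 H2.
  apply (loc_const_y D x y (fun a b => ldot (F a b) (G a b)) c); auto.
  apply HDy_ldot; auto.
Qed.

Lemma smooth_HDx U F x y : smooth_on U F -> U x y -> HDx F x y (Pdx F x y).
Proof.
  intros Hs Hu c Hc. destruct (Hs 1%nat) as [A0 [A1 [A2 [A3 A4]]]].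
  destruct Hc as [ -> | [ -> | [ -> | [ -> | -> ] ] ] ]; simpl.
  - exact (proj1 (proj2 A0) x y Hu).
  - exact (proj1 (proj2 A1) x y Hu).
  - exact (proj1 (proj2 A2) x y Hu).
  - exact (proj1 (proj2 A3) x y Hu).
  - exact (proj1 (proj2 A4) x y Hu).
Qed.
Lemma smooth_HDy U F x y : smooth_on U F -> U x y -> HDy F x y (Pdy F x y).
Proof.
  intros Hs Hu c Hc. destruct (Hs 1%nat) as [A0 [A1 [A2 [A3 A4]]]].
  destruct Hc as [ -> | [ -> | [ -> | [ -> | -> ] ] ] ]; simpl.
  - exact (proj1 (proj2 (proj2 A0)) x y Hu).
  - exact (proj1 (proj2 (proj2 A1)) x y Hu).
  - exact (proj1 (proj2 (proj2 A2)) x y Hu).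
  - exact (proj1 (proj2 (proj2 A3)) x y Hu).
  - exact (proj1 (proj2 (proj2 A4)) x y Hu).
Qed.
Lemma smooth_Pdx U F : smooth_on U F -> smooth_on U (Pdx F).
Proof.
  intros Hs k. destruct (Hs (S k)) as [A0 [A1 [A2 [A3 A4]]]].
  repeat split; [exact (proj1 (proj2 (proj2 (proj2 A0))))|exact (proj1 (proj2 (proj2 (proj2 A1))))
    |exact (proj1 (proj2 (proj2 (proj2 A2))))|exact (proj1 (proj2 (proj2 (proj2 A3))))
    |exact (proj1 (proj2 (proj2 (proj2 A4))))].
Qed.
Lemma smooth_Pdy U F : smooth_on U F -> smooth_on U (Pdy F).
Proof.
  intros Hs k. destruct (Hs (S k)) as [A0 [A1 [A2 [A3 A4]]]].
  repeat split; [exact (proj2 (proj2 (proj2 (proj2 A0))))|exact (proj2 (proj2 (proj2 (proj2 A1))))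
    |exact (proj2 (proj2 (proj2 (proj2 A2))))|exact (proj2 (proj2 (proj2 (proj2 A3))))
    |exact (proj2 (proj2 (proj2 (proj2 A4))))].
Qed.

Module SCH.
Import Coquelicot.Coquelicot.

Lemma open_loc2 (U : R -> R -> Prop) x y : open2 U -> U x y -> locally_2d U x y.
Proof.
  intros Ho Hu. destruct (Ho x y Hu) as [e [He H]].
  assert (He2 : 0 < e / 2) by lra.
  exists (mkposreal (e/2) He2). simpl. intros u v H1 H2. apply H.
  assert (0 <= Rabs (u - x)) by apply Rabs_pos.
  assert (0 <= Rabs (v - y)) by apply Rabs_pos.
  rewrite <- (pow2_abs (u - x)), <- (pow2_abs (v - y)). nra.
Qed.

Lemma cont_conv g x y : cont2_at g x y -> continuity_2d_pt g x y.
Proof.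
  intros H eps. destruct (H eps (cond_pos eps)) as [d [Hd H']].
  assert (Hd2 : 0 < d / 2) by lra.
  exists (mkposreal (d/2) Hd2). simpl. intros u v H1 H2. apply H'.
  assert (0 <= Rabs (u - x)) by apply Rabs_pos.
  assert (0 <= Rabs (v - y)) by apply Rabs_pos.
  rewrite <- (pow2_abs (u - x)), <- (pow2_abs (v - y)). nra.
Qed.

Lemma schwarz_g (U : R -> R -> Prop) g x y : open2 U -> (forall k, Ck_on k U g) -> U x y ->
  dxr (dyr g) x y = dyr (dxr g) x y.
Proof.
  intros Ho Hk Hu.
  destruct (Hk 2%nat) as [cg [dxg [dyg [C1x C1y]]]].
  destruct C1x as [cgx [dxgx [dygx [C0xx C0xy]]]].
  destruct C1y as [cgy [dxgy [dygy [C0yx C0yy]]]].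
  assert (E1 : forall u v, U u v -> Derive (fun t => g u t) v = dyr g u v).
  { intros u v H. apply is_derive_unique. apply is_derive_Reals. apply dyg; auto. }
  assert (E2 : forall u v, U u v -> Derive (fun t => g t v) u = dxr g u v).
  { intros u v H. apply is_derive_unique. apply is_derive_Reals. apply dxg; auto. }
  assert (LY : forall u v, U u v -> locally u (fun z => U z v)).
  { intros u v H. apply (locally_2d_1d_const_y U). apply open_loc2; auto. }
  assert (LX : forall u v, U u v -> locally v (fun z => U u z)).
  { intros u v H. apply (locally_2d_1d_const_x U). apply open_loc2; auto. }
  assert (F1 : forall u v, U u v ->
     Derive (fun z => Derive (fun t => g z t) v) u = dxr (dyr g) u v).
  { intros u v H. rewrite (Derive_ext_loc _ (fun z => dyr g z v)).
    - apply is_derive_unique. apply is_derive_Reals. apply dxgy; auto.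
    - apply (filter_imp (fun z => U z v)); [intros z Hz; apply E1; auto | apply LY; auto]. }
  assert (F2 : forall u v, U u v ->
     Derive (fun z => Derive (fun t => g t z) u) v = dyr (dxr g) u v).
  { intros u v H. rewrite (Derive_ext_loc _ (fun z => dxr g u z)).
    - apply is_derive_unique. apply is_derive_Reals. apply dygx; auto.
    - apply (filter_imp (fun z => U u z)); [intros z Hz; apply E2; auto | apply LX; auto]. }
  rewrite <- F1, <- F2; auto.
  apply Schwarz.
  - apply (locally_2d_impl U); [apply locally_2d_forall | apply open_loc2; auto].
    intros u v H. split; [|split; [|split]].
    + exists (dxr g u v). apply is_derive_Reals. apply dxg; auto.
    + exists (dyr g u v). apply is_derive_Reals. apply dyg; auto.
    + apply (ex_derive_ext_loc (fun z => dyr g z v)).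
      * apply (filter_imp (fun z => U z v)); [intros z Hz; symmetry; apply E1; auto | apply LY; auto].
      * exists (dxr (dyr g) u v). apply is_derive_Reals. apply dxgy; auto.
    + apply (ex_derive_ext_loc (fun z => dxr g u z)).
      * apply (filter_imp (fun z => U u z)); [intros z Hz; symmetry; apply E2; auto | apply LX; auto].
      * exists (dyr (dxr g) u v). apply is_derive_Reals. apply dygx; auto.
  - apply (continuity_2d_pt_ext_loc (dxr (dyr g))).
    + apply (locally_2d_impl U); [apply locally_2d_forall | apply open_loc2; auto].
      intros u v H. symmetry; apply F1; auto.
    + apply cont_conv. apply C0yx; auto.
  - apply (continuity_2d_pt_ext_loc (dyr (dxr g))).
    + apply (locally_2d_impl U); [apply locally_2d_forall | apply open_loc2; auto].
      intros u v H. symmetry; apply F2; auto.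
    + apply cont_conv. apply C0xy; auto.
Qed.
End SCH.

Lemma schwarz_vec U F x y : open2 U -> smooth_on U F -> U x y ->
  Pdy (Pdx F) x y = Pdx (Pdy F) x y.
Proof.
  intros Ho Hs Hu. unfold Pdx at 2, Pdy at 1. unfold Pdx, Pdy. unfold compmap. simpl.
  f_equal; symmetry; apply (SCH.schwarz_g U); auto; intro k; destruct (Hs k) as [A0 [A1 [A2 [A3 A4]]]]; assumption.
Qed.

From Stdlib Require Import FunctionalExtensionality.

Lemma Pdx_zero a b : Pdx (fun _ _ => vzero) a b = vzero.
Proof. apply HDx_Pdx. apply HDx_zero. Qed.
Lemma Pdy_zero a b : Pdy (fun _ _ => vzero) a b = vzero.
Proof. apply HDy_Pdy. apply HDy_zero. Qed.

Lemma dz_form F : dz F = fun a b => mkCV (vscal (/2) (Pdx F a b)) (vscal (-/2) (Pdy F a b)).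
Proof.
  apply functional_extensionality; intro a; apply functional_extensionality; intro b.
  unfold dz, dzC.
  change (mkCV (vscal (/2) (vadd (Pdx F a b) (Pdy (fun _ _ => vzero) a b)))
               (vscal (/2) (vadd (Pdx (fun _ _ => vzero) a b) (vscal (-1) (Pdy F a b)))) =
          mkCV (vscal (/2) (Pdx F a b)) (vscal (-/2) (Pdy F a b))).
  rewrite Pdx_zero, Pdy_zero.
  destruct (Pdx F a b), (Pdy F a b); unfold vscal, vadd, vzero; simpl; f_equal; f_equal; ring.
Qed.

Lemma dzbC_form P Q x y lPx lQy lQx lPy : HDx P x y lPx -> HDy Q x y lQy -> HDx Q x y lQx -> HDy P x y lPy ->
  dzbC (fun a b => mkCV (P a b) (Q a b)) x y =
  mkCV (vscal (/2) (vadd lPx (vscal (-1) lQy))) (vscal (/2) (vadd lQx lPy)).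
Proof.
  intros H1 H2 H3 H4. unfold dzbC.
  change (mkCV (vscal (/2) (vadd (Pdx P x y) (vscal (-1) (Pdy Q x y))))
               (vscal (/2) (vadd (Pdx Q x y) (Pdy P x y))) =
          mkCV (vscal (/2) (vadd lPx (vscal (-1) lQy))) (vscal (/2) (vadd lQx lPy))).
  rewrite (HDx_Pdx P x y lPx H1), (HDy_Pdy Q x y lQy H2), (HDx_Pdx Q x y lQx H3), (HDy_Pdy P x y lPy H4).
  reflexivity.
Qed.

Lemma dzC_form P Q x y lPx lQy lQx lPy : HDx P x y lPx -> HDy Q x y lQy -> HDx Q x y lQx -> HDy P x y lPy ->
  dzC (fun a b => mkCV (P a b) (Q a b)) x y =
  mkCV (vscal (/2) (vadd lPx lQy)) (vscal (/2) (vadd lQx (vscal (-1) lPy))).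
Proof.
  intros H1 H2 H3 H4. unfold dzC.
  change (mkCV (vscal (/2) (vadd (Pdx P x y) (Pdy Q x y)))
               (vscal (/2) (vadd (Pdx Q x y) (vscal (-1) (Pdy P x y)))) =
          mkCV (vscal (/2) (vadd lPx lQy)) (vscal (/2) (vadd lQx (vscal (-1) lPy)))).
  rewrite (HDx_Pdx P x y lPx H1), (HDy_Pdy Q x y lQy H2), (HDx_Pdx Q x y lQx H3), (HDy_Pdy P x y lPy H4).
  reflexivity.
Qed.

Lemma vscal_zero_inv k w : vscal k w = vzero -> w <> vzero -> k = 0.
Proof.
  intros H Hw. destruct w as [w0 w1 w2 w3 w4]. unfold vscal, vzero in H. simpl in H.
  injection H; intros E4 E3 E2 E1 E0.
  destruct (Req_dec k 0) as [|Hk]; auto. exfalso. apply Hw.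
  apply Rmult_integral in E0; apply Rmult_integral in E1; apply Rmult_integral in E2;
  apply Rmult_integral in E3; apply Rmult_integral in E4.
  destruct E0, E1, E2, E3, E4; try contradiction. subst; reflexivity.
Qed.

Lemma lin5_first0 k2 k3 k4 k5 e1 e2 e3 e4 e5 :
  lin5 0 k2 k3 k4 k5 e1 e2 e3 e4 e5 = vadd (vadd (vscal k2 e2) (vscal k3 e3)) (vadd (vscal k4 e4) (vscal k5 e5)).
Proof. destruct e1, e2, e3, e4, e5; unfold lin5, vadd, vscal; simpl; f_equal; ring. Qed.

Lemma lin5_only2 k2 e1 e2 e3 e4 e5 :
  lin5 0 k2 0 0 0 e1 e2 e3 e4 e5 = vscal k2 e2.
Proof. destruct e1, e2, e3, e4, e5; unfold lin5, vadd, vscal; simpl; f_equal; ring. Qed.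

Lemma parseval e1 e2 e3 e4 e5 d1 d2 d3 d4 d5 :
  ldot e1 e2 = 0 -> ldot e1 e3 = 0 -> ldot e1 e4 = 0 -> ldot e1 e5 = 0 ->
  ldot e2 e3 = 0 -> ldot e2 e4 = 0 -> ldot e2 e5 = 0 ->
  ldot e3 e4 = 0 -> ldot e3 e5 = 0 -> ldot e4 e5 = 0 ->
  ldot e1 e1 = d1 -> ldot e2 e2 = d2 -> ldot e3 e3 = d3 -> ldot e4 e4 = d4 -> ldot e5 e5 = d5 ->
  d1 <> 0 -> d2 <> 0 -> d3 <> 0 -> d4 <> 0 -> d5 <> 0 ->
  forall u v, ldot u v = ldot u e1 * ldot v e1 / d1 + ldot u e2 * ldot v e2 / d2 +
     ldot u e3 * ldot v e3 / d3 + ldot u e4 * ldot v e4 / d4 + ldot u e5 * ldot v e5 / d5.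
Proof.
  intros H12 H13 H14 H15 H23 H24 H25 H34 H35 H45 D1 D2 D3 D4 D5 N1 N2 N3 N4 N5 u v.
  assert (H21 : ldot e2 e1 = 0) by (rewrite ldot_comm; auto).
  assert (H31 : ldot e3 e1 = 0) by (rewrite ldot_comm; auto).
  assert (H41 : ldot e4 e1 = 0) by (rewrite ldot_comm; auto).
  assert (H51 : ldot e5 e1 = 0) by (rewrite ldot_comm; auto).
  assert (H32 : ldot e3 e2 = 0) by (rewrite ldot_comm; auto).
  assert (H42 : ldot e4 e2 = 0) by (rewrite ldot_comm; auto).
  assert (H52 : ldot e5 e2 = 0) by (rewrite ldot_comm; auto).
  assert (H43 : ldot e4 e3 = 0) by (rewrite ldot_comm; auto).
  assert (H53 : ldot e5 e3 = 0) by (rewrite ldot_comm; auto).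
  assert (H54 : ldot e5 e4 = 0) by (rewrite ldot_comm; auto).
  assert (Hind : forall a1 a2 a3 a4 a5, lin5 a1 a2 a3 a4 a5 e1 e2 e3 e4 e5 = vzero ->
     a1 = 0 /\ a2 = 0 /\ a3 = 0 /\ a4 = 0 /\ a5 = 0).
  { intros a1 a2 a3 a4 a5 H.
    pose proof (f_equal (fun w => ldot w e1) H) as G1.
    pose proof (f_equal (fun w => ldot w e2) H) as G2.
    pose proof (f_equal (fun w => ldot w e3) H) as G3.
    pose proof (f_equal (fun w => ldot w e4) H) as G4.
    pose proof (f_equal (fun w => ldot w e5) H) as G5.
    cbv beta in G1, G2, G3, G4, G5. unfold lin5 in G1, G2, G3, G4, G5.
    ldexp_in G1; ldexp_in G2; ldexp_in G3; ldexp_in G4; ldexp_in G5.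
    Ltac rw_all G H12 H13 H14 H15 H23 H24 H25 H34 H35 H45 H21 H31 H41 H51 H32 H42 H52 H43 H53 H54 D1 D2 D3 D4 D5 :=
      rewrite ?H12, ?H13, ?H14, ?H15, ?H23, ?H24, ?H25, ?H34, ?H35, ?H45,
            ?H21, ?H31, ?H41, ?H51, ?H32, ?H42, ?H52, ?H43, ?H53, ?H54, ?D1, ?D2, ?D3, ?D4, ?D5 in G.
    rw_all G1 H12 H13 H14 H15 H23 H24 H25 H34 H35 H45 H21 H31 H41 H51 H32 H42 H52 H43 H53 H54 D1 D2 D3 D4 D5.
    rw_all G2 H12 H13 H14 H15 H23 H24 H25 H34 H35 H45 H21 H31 H41 H51 H32 H42 H52 H43 H53 H54 D1 D2 D3 D4 D5.
    rw_all G3 H12 H13 H14 H15 H23 H24 H25 H34 H35 H45 H21 H31 H41 H51 H32 H42 H52 H43 H53 H54 D1 D2 D3 D4 D5.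
    rw_all G4 H12 H13 H14 H15 H23 H24 H25 H34 H35 H45 H21 H31 H41 H51 H32 H42 H52 H43 H53 H54 D1 D2 D3 D4 D5.
    rw_all G5 H12 H13 H14 H15 H23 H24 H25 H34 H35 H45 H21 H31 H41 H51 H32 H42 H52 H43 H53 H54 D1 D2 D3 D4 D5.
    assert (a1 * d1 = 0) by lra. assert (a2 * d2 = 0) by lra. assert (a3 * d3 = 0) by lra.
    assert (a4 * d4 = 0) by lra. assert (a5 * d5 = 0) by lra.
    repeat split; [apply (Rmult_eq_reg_r d1) | apply (Rmult_eq_reg_r d2) | apply (Rmult_eq_reg_r d3)
                  | apply (Rmult_eq_reg_r d4) | apply (Rmult_eq_reg_r d5)]; auto; lra. }
  destruct (LA.span5 e1 e2 e3 e4 e5 Hind u) as [a1 [a2 [a3 [a4 [a5 Hu]]]]].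
  subst u. unfold lin5. ldexp.
  rewrite ?H12, ?H13, ?H14, ?H15, ?H23, ?H24, ?H25, ?H34, ?H35, ?H45,
            ?H21, ?H31, ?H41, ?H51, ?H32, ?H42, ?H52, ?H43, ?H53, ?H54, ?D1, ?D2, ?D3, ?D4, ?D5.
  rewrite (ldot_comm e1 v), (ldot_comm e2 v), (ldot_comm e3 v), (ldot_comm e4 v), (ldot_comm e5 v).
  field; repeat split; auto.
Qed.

Theorem mainTheorem4
  (U : R -> R -> Prop) (f N1 N2 H : R -> R -> V5) (h : R -> R -> R) :
  open2 U ->
  conformal_spacelike_immersion_S41 U f ->
  normal_frame U f N1 N2 ->
  is_mean_curvature U f H ->
  (forall x y, U x y -> ldot (H x y) (H x y) = 0) ->
  (forall x y, U x y -> H x y = vscal (h x y) (vadd (N1 x y) (N2 x y))) ->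
  non_isotropic U f ->
  forall (U' : R -> R -> Prop) (W : R -> R -> V5),
    open2 U' -> subset2 U' U ->
    local_lift_of_null_gauss U' N1 N2 W ->
    forall x y, U' x y ->
      ldot (f x y) (W x y) = 0 /\
      ldot (f x y) (Pdx W x y) = 0 /\ ldot (f x y) (Pdy W x y) = 0 /\
      (forall v : V5, in_central_span W x y v <-> ldot (f x y) v = 0).
Proof.
  intros HoU Hf Hn Hmc HHnull Hh Hni U' W HoU' Hsub HW x y Hxy.
  destruct Hf as [Hfs Hfp]. destruct Hn as [HN1s [HN2s Hnp]]. destruct HW as [HWs HWp].
  assert (Hu : U x y) by (apply Hsub; exact Hxy).
  assert (Wrep : forall a b, U' a b -> exists t, t <> 0 /\ W a b = vscal t (vadd (N1 a b) (N2 a b))).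
  { intros a b Hab. destruct (HWp a b Hab) as [_ [_ [_ [t [Ht Heq]]]]]. exists t; auto. }
  assert (P_fW : forall a b, U' a b -> ldot (f a b) (W a b) = 0).
  { intros a b Hab. destruct (Wrep a b Hab) as [t [Ht ->]].
    destruct (Hnp a b (Hsub a b Hab)) as [h1 [h2 [h3 [h4 [h5 [h6 _]]]]]].
    ldexp. rewrite (ldot_comm (f a b) (N1 a b)), (ldot_comm (f a b) (N2 a b)), h1, h4. ring. }
  assert (P_fxW : forall a b, U' a b -> ldot (Pdx f a b) (W a b) = 0).
  { intros a b Hab. destruct (Wrep a b Hab) as [t [Ht ->]].
    destruct (Hnp a b (Hsub a b Hab)) as [h1 [h2 [h3 [h4 [h5 [h6 _]]]]]].
    ldexp. rewrite (ldot_comm (Pdx f a b) (N1 a b)), (ldot_comm (Pdx f a b) (N2 a b)), h2, h5. ring. }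
  assert (P_fyW : forall a b, U' a b -> ldot (Pdy f a b) (W a b) = 0).
  { intros a b Hab. destruct (Wrep a b Hab) as [t [Ht ->]].
    destruct (Hnp a b (Hsub a b Hab)) as [h1 [h2 [h3 [h4 [h5 [h6 _]]]]]].
    ldexp. rewrite (ldot_comm (Pdy f a b) (N1 a b)), (ldot_comm (Pdy f a b) (N2 a b)), h3, h6. ring. }
  assert (P_WW : forall a b, U' a b -> ldot (W a b) (W a b) = 0).
  { intros a b Hab. destruct (HWp a b Hab) as [[_ HH] _]. exact HH. }
  assert (P_ff : forall a b, U' a b -> ldot (f a b) (f a b) = 1).
  { intros a b Hab. exact (proj1 (Hfp a b (Hsub a b Hab))). }
  assert (P_conf : forall a b, U' a b -> ldot (Pdx f a b) (Pdx f a b) - ldot (Pdy f a b) (Pdy f a b) = 0).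
  { intros a b Hab. destruct (Hfp a b (Hsub a b Hab)) as [_ [_ [HH _]]]. lra. }
  assert (P_fxfy : forall a b, U' a b -> ldot (Pdx f a b) (Pdy f a b) = 0).
  { intros a b Hab. destruct (Hfp a b (Hsub a b Hab)) as [_ [_ [_ HH]]]. exact HH. }
  assert (HfX : forall a b, U' a b -> HDx f a b (Pdx f a b)).
  { intros a b Hab. apply (smooth_HDx U); auto. }
  assert (HfY : forall a b, U' a b -> HDy f a b (Pdy f a b)).
  { intros a b Hab. apply (smooth_HDy U); auto. }
  assert (HWX : forall a b, U' a b -> HDx W a b (Pdx W a b)).
  { intros a b Hab. apply (smooth_HDx U'); auto. }
  assert (HWY : forall a b, U' a b -> HDy W a b (Pdy W a b)).
  { intros a b Hab. apply (smooth_HDy U'); auto. }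
  assert (HfxX : HDx (Pdx f) x y (Pdx (Pdx f) x y)) by (apply (smooth_HDx U); auto; apply smooth_Pdx; auto).
  assert (HfxY : HDy (Pdx f) x y (Pdy (Pdx f) x y)) by (apply (smooth_HDy U); auto; apply smooth_Pdx; auto).
  assert (HfyX : HDx (Pdy f) x y (Pdx (Pdy f) x y)) by (apply (smooth_HDx U); auto; apply smooth_Pdy; auto).
  assert (HfyY : HDy (Pdy f) x y (Pdy (Pdy f) x y)) by (apply (smooth_HDy U); auto; apply smooth_Pdy; auto).
  assert (HWxX : HDx (Pdx W) x y (Pdx (Pdx W) x y)) by (apply (smooth_HDx U'); auto; apply smooth_Pdx; auto).
  assert (HWyY : HDy (Pdy W) x y (Pdy (Pdy W) x y)) by (apply (smooth_HDy U'); auto; apply smooth_Pdy; auto).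
  assert (Q_fWx : forall a b, U' a b -> ldot (f a b) (Pdx W a b) = 0).
  { intros a b Hab. pose proof (dot_const_x U' f W a b 0 _ _ HoU' Hab P_fW (HfX a b Hab) (HWX a b Hab)) as K.
    rewrite P_fxW in K; auto. lra. }
  assert (Q_fWy : forall a b, U' a b -> ldot (f a b) (Pdy W a b) = 0).
  { intros a b Hab. pose proof (dot_const_y U' f W a b 0 _ _ HoU' Hab P_fW (HfY a b Hab) (HWY a b Hab)) as K.
    rewrite P_fyW in K; auto. lra. }
  assert (Q_WxW : forall a b, U' a b -> ldot (Pdx W a b) (W a b) = 0).
  { intros a b Hab. pose proof (dot_const_x U' W W a b 0 _ _ HoU' Hab P_WW (HWX a b Hab) (HWX a b Hab)) as K.
    rewrite (ldot_comm (W a b)) in K. lra. }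
  assert (Q_WyW : forall a b, U' a b -> ldot (Pdy W a b) (W a b) = 0).
  { intros a b Hab. pose proof (dot_const_y U' W W a b 0 _ _ HoU' Hab P_WW (HWY a b Hab) (HWY a b Hab)) as K.
    rewrite (ldot_comm (W a b)) in K. lra. }
  assert (Q_fxf : forall a b, U' a b -> ldot (Pdx f a b) (f a b) = 0).
  { intros a b Hab. pose proof (dot_const_x U' f f a b 1 _ _ HoU' Hab P_ff (HfX a b Hab) (HfX a b Hab)) as K.
    rewrite (ldot_comm (f a b)) in K. lra. }
  assert (Q_fyf : forall a b, U' a b -> ldot (Pdy f a b) (f a b) = 0).
  { intros a b Hab. pose proof (dot_const_y U' f f a b 1 _ _ HoU' Hab P_ff (HfY a b Hab) (HfY a b Hab)) as K.
    rewrite (ldot_comm (f a b)) in K. lra. }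
  pose proof (dot_const_x U' f (Pdx W) x y 0 _ _ HoU' Hxy Q_fWx (HfX x y Hxy) HWxX) as S1.
  pose proof (dot_const_y U' f (Pdy W) x y 0 _ _ HoU' Hxy Q_fWy (HfY x y Hxy) HWyY) as S2.
  pose proof (dot_const_x U' (Pdx f) W x y 0 _ _ HoU' Hxy P_fxW HfxX (HWX x y Hxy)) as S3.
  pose proof (dot_const_y U' (Pdx f) W x y 0 _ _ HoU' Hxy P_fxW HfxY (HWY x y Hxy)) as S4.
  pose proof (dot_const_x U' (Pdy f) W x y 0 _ _ HoU' Hxy P_fyW HfyX (HWX x y Hxy)) as S5.
  pose proof (dot_const_y U' (Pdy f) W x y 0 _ _ HoU' Hxy P_fyW HfyY (HWY x y Hxy)) as S6.
  pose proof (dot_const_x U' (Pdx W) W x y 0 _ _ HoU' Hxy Q_WxW HWxX (HWX x y Hxy)) as S7.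
  pose proof (dot_const_y U' (Pdy W) W x y 0 _ _ HoU' Hxy Q_WyW HWyY (HWY x y Hxy)) as S8.
  pose proof (dot_const_x U' (Pdx f) f x y 0 _ _ HoU' Hxy Q_fxf HfxX (HfX x y Hxy)) as S9.
  pose proof (dot_const_y U' (Pdy f) f x y 0 _ _ HoU' Hxy Q_fyf HfyY (HfY x y Hxy)) as S10.
  pose proof (dot_const_y U' (Pdx f) f x y 0 _ _ HoU' Hxy Q_fxf HfxY (HfY x y Hxy)) as S11.
  pose proof (dot_const_x U' (Pdx f) (Pdy f) x y 0 _ _ HoU' Hxy P_fxfy HfxX HfyX) as S15.
  pose proof (dot_const_y U' (Pdx f) (Pdy f) x y 0 _ _ HoU' Hxy P_fxfy HfxY HfyY) as S16.
  assert (S13 : ldot (Pdx (Pdx f) x y) (Pdx f x y) + ldot (Pdx f x y) (Pdx (Pdx f) x y)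
             - (ldot (Pdx (Pdy f) x y) (Pdy f x y) + ldot (Pdy f x y) (Pdx (Pdy f) x y)) = 0).
  { eapply (loc_const_x U' x y (fun a b => ldot (Pdx f a b) (Pdx f a b) - ldot (Pdy f a b) (Pdy f a b)) 0);
      [exact HoU' | exact Hxy | exact P_conf | ].
    cbv beta. apply dpl_minus; apply HDx_ldot; auto. }
  assert (S14 : ldot (Pdy (Pdx f) x y) (Pdx f x y) + ldot (Pdx f x y) (Pdy (Pdx f) x y)
             - (ldot (Pdy (Pdy f) x y) (Pdy f x y) + ldot (Pdy f x y) (Pdy (Pdy f) x y)) = 0).
  { eapply (loc_const_y U' x y (fun a b => ldot (Pdx f a b) (Pdx f a b) - ldot (Pdy f a b) (Pdy f a b)) 0);
      [exact HoU' | exact Hxy | exact P_conf | ].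
    cbv beta. apply dpl_minus; apply HDy_ldot; auto. }
  pose proof (schwarz_vec U f x y HoU Hfs Hu) as SCH.
  rewrite <- SCH in S5, S13, S15.
  destruct (Hfp x y Hu) as [ff [Epos [Econf fxfy]]].
  destruct (Hnp x y Hu) as [n1f [n1fx [n1fy [n2f [n2fx [n2fy [n11 [n22 [n12 _]]]]]]]]].
  destruct (Wrep x y Hxy) as [t [Ht HWt]].
  destruct (HWp x y Hxy) as [[HW0 _] _].
  assert (NW : ldot (N2 x y) (W x y) = - ldot (N1 x y) (W x y)).
  { rewrite HWt. ldexp. rewrite n11, n22, n12, (ldot_comm (N2 x y) (N1 x y)), n12. ring. }
  (* mean curvature: fxx + fyy orthogonal to W *)
  assert (M1 : ldot (Pdx (Pdx f) x y) (W x y) + ldot (Pdy (Pdy f) x y) (W x y) = 0).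
  { pose proof (Hmc x y Hu) as MC. rewrite dz_form in MC.
    rewrite (dzbC_form (fun a b => vscal (/2) (Pdx f a b)) (fun a b => vscal (-/2) (Pdy f a b)) x y _ _ _ _
      (HDx_scal _ _ _ _ (/2) HfxX) (HDy_scal _ _ _ _ (-/2) HfyY) (HDx_scal _ _ _ _ (-/2) HfyX)
      (HDy_scal _ _ _ _ (/2) HfxY)) in MC.
    apply (f_equal (fun v => ldot (rv v) (W x y))) in MC. cbv beta in MC. unfold creal in MC.
    cbn [rv] in MC. rewrite (Hh x y Hu) in MC. ldexp_in MC.
    rewrite NW, (P_fW x y Hxy) in MC. nra. }
  set (E := ldot (Pdx f x y) (Pdx f x y)) in *.
  assert (HE : E <> 0) by lra.
  set (p := ldot (Pdx (Pdx f) x y) (W x y)) in *.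
  set (q := ldot (Pdy (Pdx f) x y) (W x y)) in *.
  assert (K : forall u v, ldot u v = ldot u (f x y) * ldot v (f x y) / 1 + ldot u (Pdx f x y) * ldot v (Pdx f x y) / E +
     ldot u (Pdy f x y) * ldot v (Pdy f x y) / E + ldot u (N1 x y) * ldot v (N1 x y) / 1 +
     ldot u (N2 x y) * ldot v (N2 x y) / (-1)).
  { apply parseval; auto.
    - rewrite ldot_comm; apply Q_fxf; auto.
    - rewrite ldot_comm; apply Q_fyf; auto.
    - rewrite ldot_comm; auto.
    - rewrite ldot_comm; auto.
    - rewrite ldot_comm; auto.
    - rewrite ldot_comm; auto.
    - rewrite ldot_comm; auto.
    - rewrite ldot_comm; auto.
    - lra. }
  assert (T1 : ldot (Pdx W x y) (f x y) = 0) by (rewrite ldot_comm; apply Q_fWx; auto).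
  assert (T2 : ldot (Pdx W x y) (Pdx f x y) = - p) by (rewrite ldot_comm; lra).
  assert (T3 : ldot (Pdx W x y) (Pdy f x y) = - q) by (rewrite ldot_comm; lra).
  assert (T4 : ldot (Pdx W x y) (N2 x y) = - ldot (Pdx W x y) (N1 x y)).
  { pose proof (Q_WxW x y Hxy) as Z. rewrite HWt in Z. ldexp_in Z.
    apply Rmult_integral in Z. destruct Z as [Z|Z]; [contradiction|lra]. }
  assert (U1 : ldot (Pdy W x y) (f x y) = 0) by (rewrite ldot_comm; apply Q_fWy; auto).
  assert (U2 : ldot (Pdy W x y) (Pdx f x y) = - q) by (rewrite ldot_comm; lra).
  assert (U3 : ldot (Pdy W x y) (Pdy f x y) = p) by (rewrite ldot_comm; lra).
  assert (U4 : ldot (Pdy W x y) (N2 x y) = - ldot (Pdy W x y) (N1 x y)).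
  { pose proof (Q_WyW x y Hxy) as Z. rewrite HWt in Z. ldexp_in Z.
    apply Rmult_integral in Z. destruct Z as [Z|Z]; [contradiction|lra]. }
  assert (Ha : ldot (Pdx W x y) (Pdx W x y) = (p * p + q * q) / E).
  { rewrite (K (Pdx W x y) (Pdx W x y)), T1, T2, T3, T4. field; auto. }
  assert (Hb : ldot (Pdx W x y) (Pdy W x y) = 0).
  { rewrite (K (Pdx W x y) (Pdy W x y)), T1, T2, T3, T4, U1, U2, U3, U4. field; auto. }
  assert (Hc : ldot (Pdy W x y) (Pdy W x y) = (p * p + q * q) / E).
  { rewrite (K (Pdy W x y) (Pdy W x y)), U1, U2, U3, U4. field; auto. }
  (* non-isotropy gives p^2 + q^2 <> 0 *)
  assert (Hpq : p * p + q * q <> 0).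
  { intro Hz. assert (Hp0 : p = 0) by nra. assert (Hq0 : q = 0) by nra.
    apply (Hni x y Hu).
    rewrite dz_form.
    rewrite (dzC_form (fun a b => vscal (/2) (Pdx f a b)) (fun a b => vscal (-/2) (Pdy f a b)) x y _ _ _ _
      (HDx_scal _ _ _ _ (/2) HfxX) (HDy_scal _ _ _ _ (-/2) HfyY) (HDx_scal _ _ _ _ (-/2) HfyX)
      (HDy_scal _ _ _ _ (/2) HfxY)).
    rewrite <- SCH.
    assert (R1 : ldot (Pdx (Pdx f) x y) (f x y) = - E) by lra.
    assert (R2 : ldot (Pdy (Pdy f) x y) (f x y) = - E) by lra.
    assert (R3 : ldot (Pdy (Pdx f) x y) (f x y) = 0) by lra.
    assert (R4 : ldot (Pdx (Pdx f) x y) (Pdx f x y) = ldot (Pdy (Pdx f) x y) (Pdy f x y)).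
    { rewrite (ldot_comm (Pdx f x y)) in S13. rewrite (ldot_comm (Pdy f x y)) in S13. lra. }
    assert (R5 : ldot (Pdy (Pdy f) x y) (Pdy f x y) = ldot (Pdy (Pdx f) x y) (Pdx f x y)).
    { rewrite (ldot_comm (Pdx f x y)) in S14. rewrite (ldot_comm (Pdy f x y)) in S14. lra. }
    assert (R6 : ldot (Pdx (Pdx f) x y) (Pdy f x y) = - ldot (Pdy (Pdx f) x y) (Pdx f x y)).
    { rewrite (ldot_comm (Pdx f x y)) in S15. lra. }
    assert (R7 : ldot (Pdy (Pdy f) x y) (Pdx f x y) = - ldot (Pdy (Pdx f) x y) (Pdy f x y)).
    { rewrite (ldot_comm (Pdx f x y)) in S16. lra. }
    assert (R8 : ldot (Pdx (Pdx f) x y) (N2 x y) = - ldot (Pdx (Pdx f) x y) (N1 x y)).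
    { assert (Z : ldot (Pdx (Pdx f) x y) (W x y) = 0) by (fold p; lra).
      rewrite HWt in Z. ldexp_in Z. apply Rmult_integral in Z. destruct Z as [Z|Z]; [contradiction|lra]. }
    assert (R9 : ldot (Pdy (Pdy f) x y) (N2 x y) = - ldot (Pdy (Pdy f) x y) (N1 x y)).
    { assert (Z : ldot (Pdy (Pdy f) x y) (W x y) = 0) by lra.
      rewrite HWt in Z. ldexp_in Z. apply Rmult_integral in Z. destruct Z as [Z|Z]; [contradiction|lra]. }
    assert (R10 : ldot (Pdy (Pdx f) x y) (N2 x y) = - ldot (Pdy (Pdx f) x y) (N1 x y)).
    { assert (Z : ldot (Pdy (Pdx f) x y) (W x y) = 0) by (fold q; lra).
      rewrite HWt in Z. ldexp_in Z. apply Rmult_integral in Z. destruct Z as [Z|Z]; [contradiction|lra]. }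
    unfold cdot, C0. cbn [rv iv].
    match goal with |- mkC (ldot ?a ?a - ldot ?b ?b) _ = _ => set (Zr := a); set (Zi := b) end.
    rewrite (K Zr Zr), (K Zi Zi), (K Zr Zi), (K Zi Zr).
    unfold Zr, Zi. ldexp.
    rewrite R1, R2, R3, R4, R5, R6, R7, R8, R9, R10.
    f_equal; field; auto. }
  assert (Hpos : (p * p + q * q) / E > 0).
  { apply Rdiv_lt_0_compat; [|lra]. assert (0 <= p * p + q * q) by nra. lra. }
  assert (F5 : ldot (Pdx (Pdx W) x y) (f x y) = p).
  { rewrite ldot_comm. lra. }
  assert (F6 : ldot (Pdy (Pdy W) x y) (f x y) = - p).
  { rewrite ldot_comm. lra. }
  split; [apply P_fW; auto|]. split; [apply Q_fWx; auto|]. split; [apply Q_fWy; auto|].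
  assert (Hind : forall k1 k2 k3 k4 k5,
    lin5 k1 k2 k3 k4 k5 (f x y) (W x y) (Pdx W x y) (Pdy W x y) (vadd (Pdx (Pdx W) x y) (Pdy (Pdy W) x y)) = vzero ->
    k1 = 0 /\ k2 = 0 /\ k3 = 0 /\ k4 = 0 /\ k5 = 0).
  { intros k1 k2 k3 k4 k5 Hl.
    pose proof (f_equal (fun w => ldot w (f x y)) Hl) as D1.
    pose proof (f_equal (fun w => ldot w (W x y)) Hl) as D2.
    pose proof (f_equal (fun w => ldot w (Pdx W x y)) Hl) as D3.
    pose proof (f_equal (fun w => ldot w (Pdy W x y)) Hl) as D4.
    cbv beta in D1, D2, D3, D4. unfold lin5 in D1, D2, D3, D4.
    ldexp_in D1. ldexp_in D2. ldexp_in D3. ldexp_in D4.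
    rewrite ff, (ldot_comm (W x y) (f x y)), (P_fW x y Hxy), T1, U1, F5, F6 in D1.
    assert (k1 = 0) by nra.
    rewrite (P_fW x y Hxy), (P_WW x y Hxy), (Q_WxW x y Hxy), (Q_WyW x y Hxy) in D2.
    assert (S7' : ldot (Pdx (Pdx W) x y) (W x y) = - ((p * p + q * q) / E)) by lra.
    assert (S8' : ldot (Pdy (Pdy W) x y) (W x y) = - ((p * p + q * q) / E)) by lra.
    rewrite S7', S8' in D2.
    assert (k5 = 0) by nra.
    subst k1 k5.
    rewrite (Q_fWx x y Hxy), (ldot_comm (W x y) (Pdx W x y)), (Q_WxW x y Hxy), Ha,
      (ldot_comm (Pdy W x y) (Pdx W x y)), Hb in D3.
    assert (k3 = 0) by nra.
    rewrite (Q_fWy x y Hxy), (ldot_comm (W x y) (Pdy W x y)), (Q_WyW x y Hxy), Hc, Hb in D4.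
    assert (k4 = 0) by nra.
    subst k3 k4. rewrite lin5_only2 in Hl.
    assert (k2 = 0) by (apply (vscal_zero_inv k2 (W x y)); auto).
    repeat split; auto. }
  intro v; split.
  - intros [a [b [c [d ->]]]]. ldexp.
    rewrite (P_fW x y Hxy), (Q_fWx x y Hxy), (Q_fWy x y Hxy).
    rewrite (ldot_comm (f x y) (Pdx (Pdx W) x y)), (ldot_comm (f x y) (Pdy (Pdy W) x y)), F5, F6. ring.
  - intro Hv.
    destruct (LA.span5 _ _ _ _ _ Hind v) as [k1 [k2 [k3 [k4 [k5 Hv']]]]].
    rewrite Hv' in Hv. unfold lin5 in Hv. ldexp_in Hv.
    rewrite ff, (P_fW x y Hxy), (Q_fWx x y Hxy), (Q_fWy x y Hxy),
      (ldot_comm (f x y) (Pdx (Pdx W) x y)), (ldot_comm (f x y) (Pdy (Pdy W) x y)), F5, F6 in Hv.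
    assert (k1 = 0) by nra. subst k1.
    exists k2, k3, k4, k5. rewrite Hv'. apply lin5_first0.
Qed.
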